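(* Let $(q_k,p_{k1},p_{k2})_{k\ge2}$ be real numbers with $q_k>0$, $p_{k1}\ge0$, $p_{k2}>0$ and $q_k+p_{k1}+p_{k2}=1$ for all $k\ge2$, and let $Y$ be the (1,2) random walk defined in the context. For $1\le m<k<n$, $$Q_k^n(m,n)=\sum_{s=m+1}^k\mathbf e_1A_s\cdots A_{n-1}\left(\frac{1+\sum_{s=m+1}^{n-1}\mathbf e_1A_s\cdots A_{n-1}\mathbf e_2^t}{1+\sum_{s=m+1}^{n-1}\mathbf e_1A_s\cdots A_{n-1}\mathbf e_1^t}\mathbf e_1^t-\mathbf e_2^t\right),$$ $$Q_k^{n+1}(m,n)=\sum_{s=m+1}^k\mathbf e_1A_s\cdots A_{n-1}\left(\mathbf e_2^t-\frac{\sum_{s=m+1}^{n-1}\mathbf e_1A_s\cdots A_{n-1}\mathbf e_2^t}{1+\sum_{s=m+1}^{n-1}\mathbf e_1A_s\cdots A_{n-1}\mathbf e_1^t}\mathbf e_1^t\right),$$ $$Q_k(m,n,+)=\frac{\sum_{s=m+1}^k\mathbf e_1A_s\cdots A_{n-1}\mathbf e_1^t}{1+\sum_{s=m+1}^{n-1}\mathbf e_1A_s\cdots A_{n-1}\mathbf e_1^t}.$$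
   Context: The (1,2) random walk $Y$ is the Markov chain on $\mathbb Z_+=\{0,1,2,\dots\}$ with $P(Y_{k+1}=0\mid Y_k=1)=P(Y_{k+1}=2\mid Y_k=0)=1$ and, for $n\ge2$, $P(Y_{k+1}=n-1\mid Y_k=n)=q_n$, $P(Y_{k+1}=n+1\mid Y_k=n)=p_{n1}$, $P(Y_{k+1}=n+2\mid Y_k=n)=p_{n2}$. For $k\ge2$, $a_k=(p_{k1}+p_{k2})/q_k$, $b_k=p_{k2}/q_k$, $A_k=\begin{pmatrix}a_k&b_k\\1&0\end{pmatrix}$; $\mathbf e_1=(1,0)$, $\mathbf e_2=(0,1)$, $^t$ denotes transpose. For $m\le k\le n+1$ and $j\in\{n,n+1\}$, $Q_k^j(m,n)$ is the probability, for $Y$ started at $Y_0=k$, that $Y$ hits $[n,\infty)$ before hitting $[0,m]$ and first enters $[n,\infty)$ at the site $j$; $Q_k(m,n,+)=Q_k^n(m,n)+Q_k^{n+1}(m,n)$ is the probability, starting from $k$, that $Y$ hits $[n,\infty)$ before $[0,m]$. *)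

(* Defs.v *)
From HB Require Import structures.
From mathcomp Require Import all_boot all_order all_algebra.
From mathcomp Require Import all_classical all_reals all_analysis.
Set Implicit Arguments. Unset Strict Implicit. Unset Printing Implicit Defensive.
Import Order.TTheory GRing.Theory Num.Theory numFieldNormedType.Exports.
Local Open Scope ring_scope.

Section Walk.
Variable R : realType.
Variables (q p1 p2 : nat -> R).

Definition trans (x y : nat) : R :=
  if x == 0%N then (y == 2%N)%:R
  else if x == 1%N then (y == 0%N)%:R
  else if y == x.-1 then q x
  else if y == x.+1 then p1 x
  else if y == x.+2 then p2 x
  else 0.

(* exitP m n j t x = probability, starting from x, that the walk stays in
   the open interval (m,n) at times 0..t-1 and is at site j at time t.
   For j in {n, n+1} this is the probability that the walk first enters
   [n,oo) at time t, at site j, without having hit [0,m] before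
   (all states reachable in one step from (m,n) are < n+2). *)
Fixpoint exitP (m n j t x : nat) : R :=
  match t with
  | 0%N => (x == j)%:R
  | t'.+1 => if (m < x < n)%N
             then \sum_(y < n.+2) trans x y * exitP m n j t' y
             else 0
  end.

(* Q_k^j(m,n): sum over the (disjoint) exit times t *)
Definition Qhit (m n j k : nat) : R :=
  limn (series (fun t => exitP m n j t k)).

Definition Qplus (m n k : nat) : R := Qhit m n n k + Qhit m n n.+1 k.

Definition a_ (k : nat) : R := (p1 k + p2 k) / q k.
Definition b_ (k : nat) : R := p2 k / q k.
Definition A_ (k : nat) : 'M[R]_2 :=
  \matrix_(i < 2, j < 2)
    (if (i == 0) && (j == 0) then a_ k
     else if (i == 0) && (j == 1) then b_ k
     else if (i == 1) && (j == 0) then 1 else 0).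

Definition Aprod (s n : nat) : 'M[R]_2 := \prod_(s <= i < n) A_ i.

End Walk.

Definition e1 {R : realType} : 'rV[R]_2 := delta_mx 0 0.
Definition e2 {R : realType} : 'rV[R]_2 := delta_mx 0 1.

Definition e1Mv {R : realType} (M : 'M[R]_2) (v : 'rV[R]_2) : R :=
  (e1 *m M *m v^T) 0 0.

(* Main.v *)
Require Import Defs.
From HB Require Import structures.
From mathcomp Require Import all_boot all_order all_algebra.
From mathcomp Require Import all_classical all_reals all_analysis.
From mathcomp Require Import ring lra zify.
Import Order.TTheory GRing.Theory Num.Theory numFieldNormedType.Exports.
Local Open Scope classical_set_scope.
Local Open Scope ring_scope.
Set Printing Width 200.

Lemma e1MvE (R : realType) (M : 'M[R]_2) (v : 'rV[R]_2) :
  e1Mv M v = M 0 0 * v 0 0 + M 0 1 * v 0 1.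
Proof.
rewrite /e1Mv /e1 !mxE !big_ord_recl !big_ord0 /= !mxE !big_ord_recl !big_ord0 /= !mxE /=.
have -> : lift ord0 ord0 = 1 :> 'I_2 by apply/val_inj.
have -> : ord0 = 0 :> 'I_2 by apply/val_inj.
by rewrite !mul1r !mul0r !addr0.
Qed.

Lemma Aprod_n (R : realType) (q p1 p2 : nat -> R) n : Aprod q p1 p2 n n = 1 :> 'M[R]_2.
Proof. by rewrite /Aprod big_geq. Qed.

Lemma Aprod_S (R : realType) (q p1 p2 : nat -> R) s n : (s < n)%N ->
  Aprod q p1 p2 s n = (A_ q p1 p2 s *m Aprod q p1 p2 s.+1 n :> 'M[R]_2).
Proof. by move=> h; rewrite /Aprod big_ltn // mulmxE. Qed.

Lemma A_E (R : realType) (q p1 p2 : nat -> R) s :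
  [/\ A_ q p1 p2 s 0 0 = a_ q p1 p2 s, A_ q p1 p2 s 0 1 = b_ q p2 s,
      A_ q p1 p2 s 1 0 = 1 & A_ q p1 p2 s 1 1 = 0 :> R].
Proof. by rewrite !mxE. Qed.

Lemma Aprod_E (R : realType) (q p1 p2 : nat -> R) s n : (s < n)%N ->
  let P := Aprod q p1 p2 in
  [/\ P s n 0 0 = a_ q p1 p2 s * P s.+1 n 0 0 + b_ q p2 s * P s.+1 n 1 0,
      P s n 0 1 = a_ q p1 p2 s * P s.+1 n 0 1 + b_ q p2 s * P s.+1 n 1 1,
      P s n 1 0 = P s.+1 n 0 0 & P s n 1 1 = P s.+1 n 0 1 :> R].
Proof.
move=> h P; rewrite /P (@Aprod_S _ q p1 p2 _ _ h) !mxE !big_ord_recl !big_ord0 /=.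
have -> : lift ord0 ord0 = 1 :> 'I_2 by apply/val_inj.
have -> : ord0 = 0 :> 'I_2 by apply/val_inj.
case: (A_E R q p1 p2 s) => -> -> -> ->.
by rewrite !addr0 !mul1r !mul0r !addr0.
Qed.

Lemma Aprod_nE (R : realType) (q p1 p2 : nat -> R) n :
  let P := Aprod q p1 p2 in
  [/\ P n n 0 0 = 1, P n n 0 1 = 0, P n n 1 0 = 0 & P n n 1 1 = 1 :> R].
Proof. by move=> P; rewrite /P Aprod_n !mxE. Qed.

Lemma ustep (R : realType) (q p1 p2 : nat -> R) (h : nat -> R) s :
  (2 <= s)%N -> 0 < q s -> q s + p1 s + p2 s = 1 ->
  h s = q s * h s.-1 + p1 s * h s.+1 + p2 s * h s.+2 ->
  h s - h s.-1 = a_ q p1 p2 s * (h s.+1 - h s) + b_ q p2 s * (h s.+2 - h s.+1).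
Proof.
move=> _ hq hs H.
have hq0 : q s != 0 by rewrite gt_eqF.
have E : p1 s = 1 - q s - p2 s by rewrite -hs; ring.
rewrite E in H.
have E2 : h s.-1 = (h s - (1 - q s - p2 s) * h s.+1 - p2 s * h s.+2) / q s.
  by rewrite H; field.
by rewrite E2 /a_ /b_ E; field.
Qed.

Lemma urep (R : realType) (q p1 p2 : nat -> R)
  (hq : forall k, (2 <= k)%N -> 0 < q k)
  (hsum : forall k, (2 <= k)%N -> q k + p1 k + p2 k = 1)
  (m n : nat) (hm : (1 <= m)%N) (h : nat -> R)
  (harm : forall x, (m < x < n)%N ->
     h x = q x * h x.-1 + p1 x * h x.+1 + p2 x * h x.+2) :
  forall s, (m < s <= n)%N ->
  h s - h s.-1 = Aprod q p1 p2 s n 0 0 * (h n - h n.-1) + Aprod q p1 p2 s n 0 1 * (h n.+1 - h n) /\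
  h s.+1 - h s = Aprod q p1 p2 s n 1 0 * (h n - h n.-1) + Aprod q p1 p2 s n 1 1 * (h n.+1 - h n).
Proof.
suff H : forall i s, (s + i = n)%N -> (m < s)%N ->
  h s - h s.-1 = Aprod q p1 p2 s n 0 0 * (h n - h n.-1) + Aprod q p1 p2 s n 0 1 * (h n.+1 - h n) /\
  h s.+1 - h s = Aprod q p1 p2 s n 1 0 * (h n - h n.-1) + Aprod q p1 p2 s n 1 1 * (h n.+1 - h n).
  by move=> s /andP[h1 h2]; apply: (H (n - s)%N) => //; lia.
elim=> [|i IH] s hs hms.
  rewrite addn0 in hs; subst s.
  case: (@Aprod_nE _ q p1 p2 n) => -> -> -> ->.
  by split; ring.
have hsn : (s < n)%N by lia.
have [IH1 IH2] := IH s.+1 ltac:(lia) ltac:(lia).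
case: (@Aprod_E _ q p1 p2 _ _ hsn) => -> -> -> ->.
split; last by rewrite IH1.
rewrite (@ustep _ q p1 p2 h s (_ : (2 <= s)%N) (hq s _) (hsum s _) (harm s _)); try lia.
  rewrite IH1 /=. rewrite IH2. ring.
all: by apply/andP; split; lia.
Qed.

Lemma hrep (R : realType) (q p1 p2 : nat -> R)
  (hq : forall k, (2 <= k)%N -> 0 < q k)
  (hsum : forall k, (2 <= k)%N -> q k + p1 k + p2 k = 1)
  (m n : nat) (hm : (1 <= m)%N) (h : nat -> R)
  (harm : forall x, (m < x < n)%N ->
     h x = q x * h x.-1 + p1 x * h x.+1 + p2 x * h x.+2)
  (h0 : h m = 0) k : (m <= k <= n)%N ->
  h k = \sum_(m.+1 <= s < k.+1)
     (Aprod q p1 p2 s n 0 0 * (h n - h n.-1) + Aprod q p1 p2 s n 0 1 * (h n.+1 - h n)).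
Proof.
move=> /andP[hmk hkn].
rewrite -(@eq_big_nat _ _ _ _ _ (fun s => h s - h s.-1)); last first.
  move=> s hs; apply: (proj1 (@urep _ q p1 p2 hq hsum m n hm h harm s _)); lia.
rewrite big_add1 /= telescope_sumr // h0 subr0 //.
Qed.

Lemma sum_ind (R : realType) N z (c : R) : (z < N)%N ->
  \sum_(y < N) (((y : nat) == z)%:R * c) = c.
Proof.
move=> hz; rewrite (bigD1 (Ordinal hz)) //= eqxx mul1r big1 ?addr0 // => i hi.
have -> : ((i : nat) == z) = false.
  apply/negbTE; apply: contra hi => /eqP e; apply/eqP; exact: val_inj.
by rewrite mul0r.
Qed.

Lemma trans_pt (R : realType) (q p1 p2 : nat -> R) x y (f : nat -> R) : (2 <= x)%N ->
  trans q p1 p2 x y * f y = (y == x.-1)%:R * (q x * f x.-1) + (y == x.+1)%:R * (p1 x * f x.+1)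
     + (y == x.+2)%:R * (p2 x * f x.+2).
Proof.
move=> hx; rewrite /trans.
have -> : (x == 0)%N = false by apply/eqP; lia.
have -> : (x == 1)%N = false by apply/eqP; lia.
case: (eqVneq y x.-1) => [->|h1].
  have -> : (x.-1 == x.+1) = false by apply/eqP; lia.
  have -> : (x.-1 == x.+2) = false by apply/eqP; lia.
  by rewrite !mul1r !mul0r !addr0.
case: (eqVneq y x.+1) => [->|h2].
  have -> : (x.+1 == x.+2) = false by apply/eqP; lia.
  by rewrite !mul1r !mul0r !addr0 add0r.
case: (eqVneq y x.+2) => [->|h3].
  by rewrite !mul1r !mul0r !add0r.
by rewrite !mul0r !addr0.
Qed.

Lemma sum_trans (R : realType) (q p1 p2 : nat -> R) x n (f : nat -> R) :
  (2 <= x)%N -> (x < n)%N ->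
  \sum_(y < n.+2) trans q p1 p2 x y * f y = q x * f x.-1 + p1 x * f x.+1 + p2 x * f x.+2.
Proof.
move=> h2 hn.
rewrite (eq_bigr _ (fun (y : 'I_n.+2) _ => @trans_pt _ q p1 p2 x y f h2)).
by rewrite !big_split /= !sum_ind //; lia.
Qed.

Definition G (R : realType) (q p1 p2 : nat -> R) m n j T x :=
  \sum_(0 <= t < T) exitP q p1 p2 m n j t x.
Arguments G {R}.

Lemma G_S (R : realType) (q p1 p2 : nat -> R) m n j T x :
  G q p1 p2 m n j T.+1 x = (x == j)%:R +
    (if (m < x < n)%N then \sum_(y < n.+2) trans q p1 p2 x y * G q p1 p2 m n j T y else 0).
Proof.
rewrite /G big_nat_recl //=; congr (_ + _).
case: ifP => _; last by rewrite big1.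
rewrite exchange_big /=; apply: eq_bigr => y _.
by rewrite mulr_sumr.
Qed.

Lemma trans_ge0 (R : realType) (q p1 p2 : nat -> R)
  (hq : forall k, (2 <= k)%N -> 0 < q k)
  (hp1 : forall k, (2 <= k)%N -> 0 <= p1 k)
  (hp2 : forall k, (2 <= k)%N -> 0 < p2 k) x y : 0 <= trans q p1 p2 x y.
Proof.
rewrite /trans; case: ifP => [_|/negbT h0]; first exact: ler0n.
case: ifP => [_|/negbT h1]; first exact: ler0n.
have h2 : (2 <= x)%N by lia.
case: ifP => _; first exact: ltW (hq x h2).
case: ifP => _; first exact: hp1 x h2.
case: ifP => _; first exact: ltW (hp2 x h2).
by [].
Qed.

Lemma exitP_ge0 (R : realType) (q p1 p2 : nat -> R)
  (hq : forall k, (2 <= k)%N -> 0 < q k)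
  (hp1 : forall k, (2 <= k)%N -> 0 <= p1 k)
  (hp2 : forall k, (2 <= k)%N -> 0 < p2 k) m n j t x : 0 <= exitP q p1 p2 m n j t x.
Proof.
elim: t x => [|t IH] x /=; first exact: ler0n.
case: ifP => _ //; apply: sumr_ge0 => y _; apply: mulr_ge0 => //.
exact: trans_ge0.
Qed.

Lemma G_int (R : realType) (q p1 p2 : nat -> R) m n j T x :
  (1 <= m)%N -> (n <= j)%N -> (m < x < n)%N ->
  G q p1 p2 m n j T.+1 x = q x * G q p1 p2 m n j T x.-1 + p1 x * G q p1 p2 m n j T x.+1
     + p2 x * G q p1 p2 m n j T x.+2.
Proof.
move=> hm hj hx; rewrite G_S hx.
have -> : (x == j) = false by apply/eqP; lia.
by rewrite add0r sum_trans //; lia.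
Qed.

Lemma G_ext (R : realType) (q p1 p2 : nat -> R) m n j T x :
  ~~ (m < x < n)%N -> G q p1 p2 m n j T.+1 x = (x == j)%:R.
Proof. by move=> hx; rewrite G_S (negbTE hx) addr0. Qed.

Lemma G_le1 (R : realType) (q p1 p2 : nat -> R)
  (hq : forall k, (2 <= k)%N -> 0 < q k)
  (hp1 : forall k, (2 <= k)%N -> 0 <= p1 k)
  (hp2 : forall k, (2 <= k)%N -> 0 < p2 k)
  (hsum : forall k, (2 <= k)%N -> q k + p1 k + p2 k = 1)
  m n j T x : (1 <= m)%N -> (n <= j)%N -> G q p1 p2 m n j T x <= 1.
Proof.
move=> hm hj; elim: T x => [|T IH] x; first by rewrite /G big_geq.
case hx: (m < x < n)%N.
  rewrite G_int //.
  have h2 : (2 <= x)%N by lia.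
  have := IH x.-1; have := IH x.+1; have := IH x.+2.
  have := hq x h2; have := hp1 x h2; have := hp2 x h2; have := hsum x h2.
  by nra.
rewrite G_ext ?hx //; by case: (x == j).
Qed.

Lemma G_ge0 (R : realType) (q p1 p2 : nat -> R)
  (hq : forall k, (2 <= k)%N -> 0 < q k)
  (hp1 : forall k, (2 <= k)%N -> 0 <= p1 k)
  (hp2 : forall k, (2 <= k)%N -> 0 < p2 k) m n j T x : 0 <= G q p1 p2 m n j T x.
Proof. by apply: sumr_ge0 => t _; apply: exitP_ge0. Qed.

Lemma G_mono (R : realType) (q p1 p2 : nat -> R)
  (hq : forall k, (2 <= k)%N -> 0 < q k)
  (hp1 : forall k, (2 <= k)%N -> 0 <= p1 k)
  (hp2 : forall k, (2 <= k)%N -> 0 < p2 k) m n j x :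
  {homo (fun T => G q p1 p2 m n j T x) : a b / (a <= b)%N >-> a <= b}.
Proof.
apply/nondecreasing_seqP => T.
rewrite /G big_nat_recr //= lerDl; exact: exitP_ge0.
Qed.

Lemma G_cvg (R : realType) (q p1 p2 : nat -> R)
  (hq : forall k, (2 <= k)%N -> 0 < q k)
  (hp1 : forall k, (2 <= k)%N -> 0 <= p1 k)
  (hp2 : forall k, (2 <= k)%N -> 0 < p2 k)
  (hsum : forall k, (2 <= k)%N -> q k + p1 k + p2 k = 1)
  m n j x : (1 <= m)%N -> (n <= j)%N ->
  G q p1 p2 m n j T x @[T --> \oo] --> limn (fun T => G q p1 p2 m n j T x).
Proof.
move=> hm hj; apply: nondecreasing_is_cvgn; first exact: G_mono.
by exists 1 => _ [T _ <-]; apply: G_le1.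
Qed.

Lemma Qhit_G (R : realType) (q p1 p2 : nat -> R) m n j x :
  Qhit q p1 p2 m n j x = limn (fun T => G q p1 p2 m n j T x).
Proof. by []. Qed.

Lemma g_ext (R : realType) (q p1 p2 : nat -> R) m n j x :
  ~~ (m < x < n)%N -> limn (fun T => G q p1 p2 m n j T x) = (x == j)%:R.
Proof.
move=> hx; apply/cvg_lim; first exact: Rhausdorff.
rewrite -cvg_shiftS /=.
rewrite (_ : (fun T => G q p1 p2 m n j T.+1 x) = fun _ => (x == j)%:R); last first.
  by apply/funext => T; rewrite G_ext.
exact: cvg_cst.
Qed.

Lemma g_harm (R : realType) (q p1 p2 : nat -> R)
  (hq : forall k, (2 <= k)%N -> 0 < q k)
  (hp1 : forall k, (2 <= k)%N -> 0 <= p1 k)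
  (hp2 : forall k, (2 <= k)%N -> 0 < p2 k)
  (hsum : forall k, (2 <= k)%N -> q k + p1 k + p2 k = 1)
  m n j x : (1 <= m)%N -> (n <= j)%N -> (m < x < n)%N ->
  let g y := limn (fun T => G q p1 p2 m n j T y) in
  g x = q x * g x.-1 + p1 x * g x.+1 + p2 x * g x.+2.
Proof.
move=> hm hj hx g.
have c y := @G_cvg R q p1 p2 hq hp1 hp2 hsum m n j y hm hj.
apply/cvg_lim; first exact: Rhausdorff.
rewrite -cvg_shiftS /=.
rewrite (_ : (fun T => G q p1 p2 m n j T.+1 x) = fun T => q x * G q p1 p2 m n j T x.-1 + p1 x * G q p1 p2 m n j T x.+1
     + p2 x * G q p1 p2 m n j T x.+2); last first.
  by apply/funext => T; rewrite G_int.
apply: cvgD; [apply: cvgD|]; apply: cvgM; (try exact: cvg_cst); exact: c.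
Qed.

Lemma solve (R : realType) (P00 P01 : nat -> R) m n (h : nat -> R) (A B : R) :
  (m < n)%N ->
  (forall k, (m <= k <= n)%N -> h k = \sum_(m.+1 <= s < k.+1) (P00 s * (h n - h n.-1) + P01 s * (h n.+1 - h n))) ->
  h n = A -> h n.+1 = B -> 1 + \sum_(m.+1 <= s < n) P00 s != 0 ->
  forall k, (m <= k <= n)%N ->
  h k = \sum_(m.+1 <= s < k.+1) (P00 s * ((A - (B - A) * \sum_(m.+1 <= s < n) P01 s) / (1 + \sum_(m.+1 <= s < n) P00 s))
              + P01 s * (B - A)).
Proof.
move=> hmn H hA hB hS k hk.
set S1 := \sum_(m.+1 <= s < n) P00 s in hS *.
set S2 := \sum_(m.+1 <= s < n) P01 s.
have E := H n.-1 ltac:(lia).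
rewrite prednK in E; last by lia.
rewrite big_split /= -!mulr_suml -/S1 -/S2 in E.
have eqU1 : h n.+1 - h n = B - A by rewrite hA hB.
rewrite eqU1 in E.
have eqU0 : h n - h n.-1 = (A - (B - A) * S2) / (1 + S1).
  apply: (mulIf hS); rewrite divfK //.
  move: E; set u := h n - h n.-1.
  have -> : h n.-1 = A - u by rewrite /u hA; ring.
  move=> E.
  have E' : u * S1 = A - u - (B - A) * S2 by rewrite E; ring.
  by rewrite mulrDr mulr1 E'; ring.
by rewrite (H k hk) eqU0 eqU1.
Qed.

Lemma Aprod_ge0 (R : realType) (q p1 p2 : nat -> R)
  (hq : forall k, (2 <= k)%N -> 0 < q k)
  (hp1 : forall k, (2 <= k)%N -> 0 <= p1 k)
  (hp2 : forall k, (2 <= k)%N -> 0 < p2 k) n s : (2 <= s)%N ->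
  [/\ 0 <= Aprod q p1 p2 s n 0 0, 0 <= Aprod q p1 p2 s n 0 1,
      0 <= Aprod q p1 p2 s n 1 0 & 0 <= Aprod q p1 p2 s n 1 1].
Proof.
suff H : forall i s, (n <= s + i)%N -> (2 <= s)%N ->
  [/\ 0 <= Aprod q p1 p2 s n 0 0, 0 <= Aprod q p1 p2 s n 0 1,
      0 <= Aprod q p1 p2 s n 1 0 & 0 <= Aprod q p1 p2 s n 1 1].
  by move=> hs; apply: (H n) => //; lia.
elim=> [|i IH] {}s hs h2.
  rewrite addn0 in hs; rewrite /Aprod big_geq // !mxE /=; split; exact: ler0n.
case: (leqP n s) => hsn.
  rewrite /Aprod big_geq // !mxE /=; split; exact: ler0n.
have [a b c d] := IH s.+1 ltac:(lia) ltac:(lia).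
have ha : 0 <= a_ q p1 p2 s.
  rewrite /a_; apply: divr_ge0; last exact: ltW (hq s h2).
  by apply: addr_ge0; [exact: hp1 | exact: ltW (hp2 s h2)].
have hb : 0 <= b_ q p2 s.
  by rewrite /b_; apply: divr_ge0; [exact: ltW (hp2 s h2) | exact: ltW (hq s h2)].
case: (@Aprod_E _ q p1 p2 _ _ hsn) => -> -> -> ->.
by split => //; apply: addr_ge0; apply: mulr_ge0.
Qed.

Lemma e1E (R : realType) : (e1 : 'rV[R]_2) 0 0 = 1 /\ (e1 : 'rV[R]_2) 0 1 = 0.
Proof. by rewrite /e1 !mxE. Qed.
Lemma e2E (R : realType) : (e2 : 'rV[R]_2) 0 0 = 0 /\ (e2 : 'rV[R]_2) 0 1 = 1.
Proof. by rewrite /e2 !mxE. Qed.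

Theorem lemma1 (R : realType) (q p1 p2 : nat -> R)
  (hq : forall k, (2 <= k)%N -> 0 < q k)
  (hp1 : forall k, (2 <= k)%N -> 0 <= p1 k)
  (hp2 : forall k, (2 <= k)%N -> 0 < p2 k)
  (hsum : forall k, (2 <= k)%N -> q k + p1 k + p2 k = 1)
  (m k n : nat) (hm : (1 <= m)%N) (hmk : (m < k)%N) (hkn : (k < n)%N) :
  let P s := Aprod q p1 p2 s n in
  let S1 := \sum_(m.+1 <= s < n) e1Mv (P s) e1 in
  let S2 := \sum_(m.+1 <= s < n) e1Mv (P s) e2 in
  [/\ Qhit q p1 p2 m n n k =
        \sum_(m.+1 <= s < k.+1) e1Mv (P s) (((1 + S2) / (1 + S1)) *: e1 - e2),
      Qhit q p1 p2 m n n.+1 k =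
        \sum_(m.+1 <= s < k.+1) e1Mv (P s) (e2 - (S2 / (1 + S1)) *: e1)
    & Qplus q p1 p2 m n k =
        (\sum_(m.+1 <= s < k.+1) e1Mv (P s) e1) / (1 + S1)].
Proof.
move=> P S1 S2.
have eS1 : S1 = \sum_(m.+1 <= s < n) P s 0 0.
  by apply: eq_bigr => s _; rewrite e1MvE; case: (e1E R) => -> ->; ring.
have eS2 : S2 = \sum_(m.+1 <= s < n) P s 0 1.
  by apply: eq_bigr => s _; rewrite e1MvE; case: (e2E R) => -> ->; ring.
have S1ge0 : 0 <= S1.
  rewrite eS1 big_nat_cond; apply: sumr_ge0 => s /andP[/andP[hs _] _].
  by case: (@Aprod_ge0 _ q p1 p2 hq hp1 hp2 n s ltac:(lia)).
have hS : 1 + \sum_(m.+1 <= s < n) P s 0 0 != 0.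
  by rewrite -eS1; apply/eqP => e; lra.
have key : forall j, (n <= j)%N -> forall k, (m <= k <= n)%N ->
  limn (fun T => G q p1 p2 m n j T k) =
  \sum_(m.+1 <= s < k.+1) (P s 0 0 * (limn (fun T => G q p1 p2 m n j T n) - limn (fun T => G q p1 p2 m n j T n.-1))
     + P s 0 1 * (limn (fun T => G q p1 p2 m n j T n.+1) - limn (fun T => G q p1 p2 m n j T n))).
  move=> j hj k0 hk0.
  apply: (@hrep _ q p1 p2 hq hsum m n hm (fun y => limn (fun T => G q p1 p2 m n j T y))) => //.
    by move=> x hx; apply: g_harm.
  rewrite g_ext; last by apply/negP; lia.
  by have -> : (m == j) = false by apply/eqP; lia.
have hmn : (m < n)%N by lia.
have i01 : (0 == 1 :> 'I_2) = false by [].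
have i10 : (1 == 0 :> 'I_2) = false by [].
have hk : (m <= k <= n)%N by lia.
have gn j : (n <= j)%N -> limn (fun T => G q p1 p2 m n j T n) = (n == j)%:R.
  by move=> hj; apply: g_ext; apply/negP; lia.
have gn1 j : (n <= j)%N -> limn (fun T => G q p1 p2 m n j T n.+1) = (n.+1 == j)%:R.
  by move=> hj; apply: g_ext; apply/negP; lia.
have Q1 : Qhit q p1 p2 m n n k =
        \sum_(m.+1 <= s < k.+1) e1Mv (P s) (((1 + S2) / (1 + S1)) *: e1 - e2).
  rewrite Qhit_G (@solve _ (fun s => P s 0 0) (fun s => P s 0 1) m n _ _ _ hmn (key n (leqnn n))
     (gn n (leqnn n)) (gn1 n (leqnn n)) hS k hk).
  apply: eq_bigr => s _; rewrite e1MvE !mxE.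
  rewrite -eS1 -eS2 !eqxx /= (_ : (n.+1 == n)%:R = 0 :> R); last by have -> : (n.+1 == n) = false by apply/eqP; lia.
  by ring.
have Q2 : Qhit q p1 p2 m n n.+1 k =
        \sum_(m.+1 <= s < k.+1) e1Mv (P s) (e2 - (S2 / (1 + S1)) *: e1).
  rewrite Qhit_G (@solve _ (fun s => P s 0 0) (fun s => P s 0 1) m n _ _ _ hmn (key n.+1 (leqnSn n))
     (gn n.+1 (leqnSn n)) (gn1 n.+1 (leqnSn n)) hS k hk).
  apply: eq_bigr => s _; rewrite e1MvE !mxE /=.
  rewrite -eS1 -eS2 !eqxx /= (_ : (n == n.+1)%:R = 0 :> R); last by have -> : (n == n.+1) = false by apply/eqP; lia.
  by ring.
split => //.
rewrite /Qplus Q1 Q2 -big_split /= [RHS]mulr_suml; apply: eq_bigr => s _.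
rewrite !e1MvE !mxE !eqxx /=.
have hS' : 1 + S1 != 0 by rewrite eS1.
by field.
Qed.
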